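(* Let $e=(B,X,M,A,X)$ be an idempotent of $\mathbb M$ with $e\notin\{\mathbf0,\mathbf1\}$, let $(B,X)[\overline z]$ be a reachable term of $\overline{\mathcal G}$, and let $z_e\in\overline I^*$ with $\varphi(z_e)=e$. Then $L_\emptyset((B,X)[z_e\overline z])\subseteq\ \downarrow L_\emptyset((B,X)[\overline z])$.
   Context: Let $\mathcal{G}=(N,T,I,P,S)$ be an indexed grammar: $N$ (non-terminals), $T$ (terminals), $I$ (stack symbols) finite pairwise disjoint alphabets, $S\in N$, and productions of the forms $A\to w$ ($w\in T^*$), $A\to BC$, $A\to Bf$, $Af\to B$ ($A,B,C\in N$, $f\in I$). Terms $A[z]$ ($A\in N$, $z\in I^*$ the stack, top on the left; $A$ means $A[\varepsilon]$); sentential forms are words over terms and terminals; derivation: $uA[z]v\Rightarrow uB[z]C[z]v$ if $A\to BC\in P$; $uA[z]v\Rightarrow uB[fz]v$ if $A\to Bf\in P$; $uA[fz]v\Rightarrow uB[z]v$ if $Af\to B\in P$; $uA[z]v\Rightarrow uwv$ if $A\to w\in P$, $w\in T^*$; $\Rightarrow^*$ is the reflexive transitive closure; $\downarrow L$ is the set of scattered subwords of words in $L$. For $X\subseteq N$, $z\in I^*$: $z\cdot X=\{A\in N:\exists u\in(X\cup T)^*, A[z]\Rightarrow^*u\}$ (non-terminals in $u$ with empty stack); $\mathrm{Useful}=\{A:\exists w\in T^*, A\Rightarrow^*w\}$; assume $S\in\mathrm{Useful}$. The annotated version $\overline{\mathcal G}$ has non-terminals $\overline N=\{(A,X)\in N\times2^N:A\in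 X\}$, stack symbols $\overline I=I\times 2^N$, start $(S,\mathrm{Useful})$, and productions: $(A,X)\to w$ for $A\to w\in P$, $A\in X$; $(A,X)\to(B,X)(C,X)$ for $A\to BC\in P$, $A,B,C\in X$; $(A,X)\to(B,Y)(f,X)$ for $A\to Bf\in P$ with $Y=f\cdot X$, $A\in X$, $B\in Y$; $(A,Y)(f,X)\to(B,X)$ for $Af\to B\in P$ with $Y=f\cdot X$, $A\in Y$, $B\in X$. A term of $\overline{\mathcal G}$ is reachable if it occurs in some sentential form $u$ with $(S,\mathrm{Useful})\Rightarrow^*_{\overline{\mathcal G}}u$. For a sentential form $u$ of $\overline{\mathcal G}$, $L_\emptyset(u)=\{w\in T^*:u\Rightarrow^*_{\overline{\mathcal G}}w\}$. Assume every $f\in I$ occurs in some production $A\to Bf$ and there are functions $\alpha,\beta:I\to N$ such that every production $A\to Bf$ in $P$ satisfies $A=\alpha(f)$, $B=\beta(f)$. For $X\subseteq N$, $A\,\mathcal R_X\,B$ holds iff $A,B\in X$ and $(A,X)\Rightarrow^*_{\overline{\mathcal G}}u\,(B,X)\,v$ for some sentential forms $u,v$ of $\overline{\mathcal G}$. The stack monoid $\mathbb M$ has elements: all tuples $(B,Y,M,A,X)$ with $A,B\in N$, $X,Y\subseteq N$, $M\in\mathbb B^{N\times N}$ (Boolean matrices, product over $(\vee,\wedge)$), plus a neutral element $\mathbf 1$ and an absorbing element $\mathbf 0$; product $(B_2,Y_2,M_2,A_2,X_2)\cdot(B_1,Y_1,M_1,A_1,X_1)=(B_2,Y_2,M_1M_2,A_1,X_1)$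 if $X_2=Y_1$ and $B_1\,\mathcal R_{X_2}\,A_2$, and $\mathbf 0$ otherwise. $\varphi:\overline I^*\to\mathbb M$ is the monoid morphism with $\varphi(f,X)=(\beta(f),f\cdot X,M_{f,X},\alpha(f),X)$, where $M_{f,X}(A,B)=\top$ iff $A[f]\Rightarrow^*_{\mathcal G}uBv$ for some $u,v\in(X\cup T)^*$. An element $e$ is idempotent if $e\cdot e=e$. *)

(* Defs.v *)
From mathcomp Require Import all_boot.
From Stdlib Require Import ClassicalEpsilon.
Set Implicit Arguments.
Unset Strict Implicit.
Unset Printing Implicit Defensive.

Definition pb (Q : Prop) : bool :=
  if excluded_middle_informative Q then true else false.

(* Productions over non-terminals Nt, terminals Te, stack symbols St:
   PT A w      :  A -> w         (w in Te^* )
   PB A B C    :  A -> B C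
   PPush A B f :  A -> B f
   PPop A f B  :  A f -> B                                                  *)
Inductive prod (Nt Te St : Type) :=
| PT of Nt & seq Te
| PB of Nt & Nt & Nt
| PPush of Nt & Nt & St
| PPop of Nt & St & Nt.

(* Symbols of sentential forms: terms A[z] (top of stack on the left) or terminals. *)
Inductive sym (Nt Te St : Type) :=
| STerm of Nt & seq St
| SLet of Te.

Arguments PT {Nt Te St}. Arguments PB {Nt Te St}.
Arguments PPush {Nt Te St}. Arguments PPop {Nt Te St}.
Arguments STerm {Nt Te St}. Arguments SLet {Nt Te St}.

Section Derivation.
Variables (Nt Te St : Type) (P : prod Nt Te St -> Prop).

Inductive step : seq (sym Nt Te St) -> seq (sym Nt Te St) -> Prop :=
| stepB u v A B C z : P (PB A B C) ->
    step (u ++ STerm A z :: v) (u ++ STerm B z :: STerm C z :: v)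
| stepPush u v A B f z : P (PPush A B f) ->
    step (u ++ STerm A z :: v) (u ++ STerm B (f :: z) :: v)
| stepPop u v A B f z : P (PPop A f B) ->
    step (u ++ STerm A (f :: z) :: v) (u ++ STerm B z :: v)
| stepT u v A w z : P (PT A w) ->
    step (u ++ STerm A z :: v) (u ++ map SLet w ++ v).

Inductive derives : seq (sym Nt Te St) -> seq (sym Nt Te St) -> Prop :=
| der_refl u : derives u u
| der_step u v w : step u v -> derives v w -> derives u w.

End Derivation.

Section Annotated.
Variables (N T I : finType) (P : prod N T I -> Prop).

Definition okX (X : {set N}) (s : sym N T I) : Prop :=
  match s with
  | SLet _ => True
  | STerm C z => z = [::] /\ C \in X
  end.

Definition dotX (z : seq I) (X : {set N}) : {set N} :=
  [set A | pb (exists u, derives P [:: STerm A z] u /\ List.Forall (okX X) u)].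

Definition Useful (A : N) : Prop :=
  exists w : seq T, derives P [:: STerm A [::]] (map SLet w).

Definition UsefulSet : {set N} := [set A | pb (Useful A)].

Definition Pbar (p : prod (N * {set N}) T (I * {set N})) : Prop :=
  match p with
  | PT AX w => P (PT AX.1 w) /\ AX.1 \in AX.2
  | PB AX BX CX =>
      BX.2 = AX.2 /\ CX.2 = AX.2 /\ P (PB AX.1 BX.1 CX.1) /\
      AX.1 \in AX.2 /\ BX.1 \in AX.2 /\ CX.1 \in AX.2
  | PPush AX BY fX =>
      fX.2 = AX.2 /\ BY.2 = dotX [:: fX.1] AX.2 /\ P (PPush AX.1 BY.1 fX.1) /\
      AX.1 \in AX.2 /\ BY.1 \in BY.2
  | PPop AY fX BX =>
      BX.2 = fX.2 /\ AY.2 = dotX [:: fX.1] fX.2 /\ P (PPop AY.1 fX.1 BX.1) /\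
      AY.1 \in AY.2 /\ BX.1 \in fX.2
  end.

Definition asym := sym (N * {set N}) T (I * {set N}).

Definition reachable (S : N) (t : asym) : Prop :=
  exists u v, derives Pbar [:: STerm (S, UsefulSet) [::]] (u ++ t :: v).

Definition Lang (u : seq asym) (w : seq T) : Prop :=
  derives Pbar u (map SLet w).

Definition Rrel (X : {set N}) (A B : N) : Prop :=
  A \in X /\ B \in X /\
  exists u v, derives Pbar [:: STerm (A, X) [::]] (u ++ STerm (B, X) [::] :: v).

Definition bmat := {ffun N * N -> bool}.
Definition bmul (M1 M2 : bmat) : bmat :=
  [ffun p : N * N => [exists k : N, M1 (p.1, k) && M2 (k, p.2)]].

Inductive mon :=
| MOne
| MZero
| MElt of N & {set N} & bmat & N & {set N}.

Definition mmul (a b : mon) : mon :=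
  match a, b with
  | MOne, _ => b
  | _, MOne => a
  | MZero, _ => MZero
  | _, MZero => MZero
  | MElt B2 Y2 M2 A2 X2, MElt B1 Y1 M1 A1 X1 =>
      if (X2 == Y1) && pb (Rrel X2 B1 A2) then MElt B2 Y2 (bmul M1 M2) A1 X1
      else MZero
  end.

Definition mon_idem (e : mon) : Prop := mmul e e = e.

Definition Mfx (f : I) (X : {set N}) : bmat :=
  [ffun p : N * N => pb (exists u v,
     derives P [:: STerm p.1 [:: f]] (u ++ STerm p.2 [::] :: v) /\
     List.Forall (okX X) u /\ List.Forall (okX X) v)].

Variables (alpha beta : I -> N).

Definition phi1 (fX : I * {set N}) : mon :=
  MElt (beta fX.1) (dotX [:: fX.1] fX.2) (Mfx fX.1 fX.2) (alpha fX.1) fX.2.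

Definition phi (z : seq (I * {set N})) : mon := foldr mmul MOne (map phi1 z).

End Annotated.

(* Main.v *)
Require Import Defs.
From mathcomp Require Import all_boot.
From Stdlib Require Import ClassicalEpsilon.
Set Implicit Arguments.
Unset Strict Implicit.
Unset Printing Implicit Defensive.

Section Generic.
Variables (Nt Te St : Type) (R : prod Nt Te St -> Prop).
Local Notation sy := (sym Nt Te St).

Lemma derives_trans (u v w : seq sy) : derives R u v -> derives R v w -> derives R u w.
Proof. elim=> [//|a b c H _ IH] Hw; exact: der_step H (IH Hw). Qed.

Lemma derives1 (u v : seq sy) : step R u v -> derives R u v.
Proof. move=> H; exact: der_step H (der_refl _ _). Qed.

Lemma step_ctx (x y u v : seq sy) : step R u v -> step R (x ++ u ++ y) (x ++ v ++ y).
Proof.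
case=> [u0 v0 A B C z H|u0 v0 A B f z H|u0 v0 A B f z H|u0 v0 A w z H].
- have -> : x ++ (u0 ++ STerm A z :: v0) ++ y = (x ++ u0) ++ STerm A z :: (v0 ++ y) by rewrite -!catA.
  have -> : x ++ (u0 ++ [:: STerm B z, STerm C z & v0]) ++ y = (x ++ u0) ++ [:: STerm B z, STerm C z & v0 ++ y] by rewrite -!catA.
  exact: stepB.
- have -> : x ++ (u0 ++ STerm A z :: v0) ++ y = (x ++ u0) ++ STerm A z :: (v0 ++ y) by rewrite -!catA.
  have -> : x ++ (u0 ++ STerm B (f :: z) :: v0) ++ y = (x ++ u0) ++ STerm B (f :: z) :: (v0 ++ y) by rewrite -!catA.
  exact: stepPush.
- have -> : x ++ (u0 ++ STerm A (f :: z) :: v0) ++ y = (x ++ u0) ++ STerm A (f :: z) :: (v0 ++ y) by rewrite -!catA.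
  have -> : x ++ (u0 ++ STerm B z :: v0) ++ y = (x ++ u0) ++ STerm B z :: (v0 ++ y) by rewrite -!catA.
  exact: stepPop.
- have -> : x ++ (u0 ++ STerm A z :: v0) ++ y = (x ++ u0) ++ STerm A z :: (v0 ++ y) by rewrite -!catA.
  have -> : x ++ (u0 ++ map SLet w ++ v0) ++ y = (x ++ u0) ++ map SLet w ++ (v0 ++ y) by rewrite -!catA.
  exact: stepT.
Qed.

Lemma derives_ctx (x y u v : seq sy) : derives R u v -> derives R (x ++ u ++ y) (x ++ v ++ y).
Proof.
elim=> [a|a b c H _ IH]; first exact: der_refl.
exact: der_step (step_ctx x y H) IH.
Qed.

Lemma derives_cat (u1 v1 u2 v2 : seq sy) :
  derives R u1 v1 -> derives R u2 v2 -> derives R (u1 ++ u2) (v1 ++ v2).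
Proof.
move=> H1 H2.
apply: (@derives_trans _ (v1 ++ u2)).
  by have := derives_ctx [::] u2 H1; rewrite /=.
by have := derives_ctx v1 [::] H2; rewrite !cats0.
Qed.

Lemma compose (Q : sy -> Prop) (u : seq sy) :
  List.Forall (fun t => exists v, derives R [:: t] v /\ List.Forall Q v) u ->
  exists v, derives R u v /\ List.Forall Q v.
Proof.
elim: u => [|t u IH] H; first by exists [::]; split; [exact: der_refl|constructor].
inversion H as [|a b [v1 [D1 F1]] H2]; subst.
have [v2 [D2 F2]] := IH H2.
exists (v1 ++ v2); split; first exact: (derives_cat D1 D2).
by apply/List.Forall_app.
Qed.

Definition liftT (s : seq St) (t : sy) : sy :=
  match t with STerm A z => STerm A (z ++ s) | SLet a => SLet a end.
Definition liftF s (u : seq sy) := map (liftT s) u.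

Lemma liftF_let s w : liftF s (map SLet w) = map SLet w.
Proof. by elim: w => //= a w ->. Qed.

Lemma step_lift s (u v : seq sy) : step R u v -> step R (liftF s u) (liftF s v).
Proof.
rewrite /liftF.
case=> [u0 v0 A B C z H|u0 v0 A B f z H|u0 v0 A B f z H|u0 v0 A w z H];
  rewrite ?map_cat /=.
- exact: stepB.
- exact: stepPush.
- exact: stepPop.
- by rewrite -/(liftF s (map SLet w)) liftF_let; exact: stepT.
Qed.

Lemma derives_lift s (u v : seq sy) : derives R u v -> derives R (liftF s u) (liftF s v).
Proof.
elim=> [a|a b c H _ IH]; first exact: der_refl.
exact: der_step (step_lift s H) IH.
Qed.

Lemma forall_let (v : seq sy) :
  List.Forall (fun t => exists a, t = SLet a) v -> exists w, v = map SLet w.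
Proof.
elim: v => [|t v IH] H; first by exists [::].
inversion H as [|a b [x ->] H2]; subst.
have [w ->] := IH H2; by exists (x :: w).
Qed.

End Generic.

Lemma pbT (Q : Prop) : Q -> pb Q = true.
Proof. by rewrite /pb; case: excluded_middle_informative. Qed.
Lemma pbP (Q : Prop) : pb Q = true -> Q.
Proof. by rewrite /pb; case: excluded_middle_informative. Qed.
Section GSide.
Variables (N T I : finType) (P : prod N T I -> Prop).
Local Notation gs := (sym N T I).

Inductive Gen (L : N -> seq I -> Prop) : N -> seq I -> Prop :=
| GLeaf D z : L D z -> Gen L D z
| GT D z w : P (PT D w) -> Gen L D z
| GB D E F z : P (PB D E F) -> Gen L E z -> Gen L F z -> Gen L D z
| GPush D E f z : P (PPush D E f) -> Gen L E (f :: z) -> Gen L D z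
| GPop D f E z : P (PPop D f E) -> Gen L E z -> Gen L D (f :: z).

Definition okL (L : N -> seq I -> Prop) (t : gs) : Prop :=
  match t with SLet _ => True | STerm E z => L E z end.
Definition GenT L (t : gs) : Prop :=
  match t with SLet _ => True | STerm D z => Gen L D z end.

Lemma gen_back L (u v : seq gs) : derives P u v ->
  List.Forall (okL L) v -> List.Forall (GenT L) u.
Proof.
elim=> [a|a b c H _ IH] Hv.
  apply: List.Forall_impl Hv; case=> //= D z; exact: GLeaf.
move: (IH Hv) => {IH Hv}.
case: H => [u0 v0 A B C z H|u0 v0 A B f z H|u0 v0 A B f z H|u0 v0 A w0 z H]
  /List.Forall_app [H1 H2]; apply/List.Forall_app; split => //.
- inversion H2 as [|? ? HB H3]; subst; inversion H3 as [|? ? HC H4]; subst.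
  constructor => //; exact: GB H HB HC.
- inversion H2 as [|? ? HB H3]; subst; constructor => //; exact: GPush H HB.
- inversion H2 as [|? ? HB H3]; subst; constructor => //; exact: GPop H HB.
- move/List.Forall_app: H2 => [_ H3]; constructor => //; exact: GT H.
Qed.

Lemma gen_fwd L D z : Gen L D z ->
  exists u, derives P [:: STerm D z] u /\ List.Forall (okL L) u.
Proof.
elim=> {D z} [D z H|D z w H|D E F z H _ [u1 [D1 F1]] _ [u2 [D2 F2]]|
              D E f z H _ [u1 [D1 F1]]|D f E z H _ [u1 [D1 F1]]].
- exists [:: STerm D z]; split; [exact: der_refl| by constructor].
- exists (map SLet w); split.
    apply: derives1; have := @stepT _ _ _ P [::] [::] D w z H; by rewrite /= cats0.
  by elim: w {H} => //= a w IH; constructor.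
- exists (u1 ++ u2); split; last by apply/List.Forall_app.
  apply: der_step; first by have := @stepB _ _ _ P [::] [::] D E F z H; exact.
  exact: (derives_cat D1 D2 (u1 := [:: STerm E z]) (u2 := [:: STerm F z])).
- exists u1; split => //; apply: der_step D1.
  by have := @stepPush _ _ _ P [::] [::] D E f z H; exact.
- exists u1; split => //; apply: der_step D1.
  by have := @stepPop _ _ _ P [::] [::] D E f z H; exact.
Qed.

Lemma gen_mono (L1 L2 : N -> seq I -> Prop) : (forall E z, L1 E z -> L2 E z) ->
  forall D z, Gen L1 D z -> Gen L2 D z.
Proof.
move=> HL D z; elim=> {D z} [D z H|D z w H|D E F z H _ H1 _ H2|D E f z H _ H1|D f E z H _ H1].
- exact/GLeaf/HL.
- exact: GT H.
- exact: GB H H1 H2.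
- exact: GPush H H1.
- exact: GPop H H1.
Qed.

Lemma gen_split L z0 : (forall E zz, L E zz -> zz = [::]) ->
  forall D zz, Gen L D zz -> forall z, zz = z ++ z0 ->
  Gen (fun E y => y = [::] /\ Gen L E z0) D z.
Proof.
move=> HL D zz; elim=> {D zz} [D zz H|D zz w H|D E F zz H HE IHE HF IHF|
    D E f zz H HE IHE|D f E zz H HE IHE] z Ez.
- have := HL _ _ H; rewrite Ez => /(f_equal size) /eqP; rewrite size_cat addn_eq0 !size_eq0 => /andP [/eqP Z /eqP Z0].
  subst; apply: GLeaf; split => //; exact: GLeaf.
- exact: GT H.
- exact: GB H (IHE _ Ez) (IHF _ Ez).
- apply: GPush H (IHE (f :: z) _); by rewrite Ez.
- case: z Ez => [|g z1] /= Ez.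
    apply: GLeaf; split => //; rewrite -Ez; exact: GPop H HE.
  case: Ez => <- Ez; exact: GPop H (IHE _ Ez).
Qed.

Lemma gen_unsplit L z0 D z :
  Gen (fun E y => y = [::] /\ Gen L E z0) D z -> Gen L D (z ++ z0).
Proof.
elim=> {D z} [D z [-> H]|D z w H|D E F z H _ H1 _ H2|D E f z H _ H1|D f E z H _ H1] //.
- exact: GT H.
- exact: GB H H1 H2.
- exact: GPush H H1.
- exact: GPop H H1.
Qed.

Fixpoint annX (z : seq I) (Y : {set N}) : {set N} :=
  match z with [::] => Y | h :: z' => dotX P [:: h] (annX z' Y) end.
Fixpoint annS (z : seq I) (Y : {set N}) : seq (I * {set N}) :=
  match z with [::] => [::] | h :: z' => (h, annX z' Y) :: annS z' Y end.

Definition closed (Y : {set N}) := forall D, D \in dotX P [::] Y -> D \in Y.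

Lemma okL_okX (L : N -> seq I -> Prop) (Y : {set N}) (u : seq gs) :
  (forall E zz, L E zz -> zz = [::] /\ E \in Y) ->
  List.Forall (okL L) u -> List.Forall (okX Y) u.
Proof. move=> HL; apply: List.Forall_impl; case=> //= E zz; exact: HL. Qed.

Lemma gen_mem L (Y : {set N}) : (forall E zz, L E zz -> zz = [::] /\ E \in Y) -> closed Y ->
  forall z D, Gen L D z -> D \in annX z Y.
Proof.
move=> HL cY; elim=> [|h z IH] D G /=.
  have [u [Du Fu]] := gen_fwd G; apply: cY; rewrite inE; apply: pbT.
  exists u; split => //; exact: okL_okX Fu.
have G' := gen_split (fun E zz H => (HL E zz H).1) G (z := [:: h]) erefl.
have [u [Du Fu]] := gen_fwd G'; rewrite inE; apply: pbT.
exists u; split => //; apply: List.Forall_impl Fu; case=> //= E zz [-> GE].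
by split => //; exact: IH.
Qed.

Definition Lstd (Y : {set N}) E (zz : seq I) := zz = [::] /\ E \in Y.

Lemma mem_gen (Y : {set N}) : forall z D, D \in annX z Y -> Gen (Lstd Y) D z.
Proof.
elim=> [|h z IH] D /= HD; first exact: GLeaf.
move: HD; rewrite inE => /pbP [u [Du Fu]].
have HF : List.Forall (okL (fun E y => y = [::] /\ Gen (Lstd Y) E z)) u.
  by apply: List.Forall_impl Fu; case=> //= E zz [-> HE]; split => //; exact: IH.
have /= G := List.Forall_inv (gen_back Du HF).
exact: (@gen_unsplit (Lstd Y) z D [:: h] G).
Qed.

Lemma closed_dot h Y : closed (dotX P [:: h] Y).
Proof.
move=> D; rewrite !inE => /pbP [u [Du Fu]]; apply: pbT.
have Dl := derives_lift [:: h] Du; rewrite /= in Dl.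
have HF : List.Forall (fun t => exists v, derives P [:: t] v /\ List.Forall (okX Y) v) (liftF [:: h] u).
  elim: u Fu {Du Dl} => [|t u IH] Fu; first by constructor.
  move/List.Forall_cons_iff: Fu => [Ht Fu']; constructor; last exact: IH.
  case: t Ht => [E zz [-> HE]|a] /=.
    by move: HE; rewrite inE => /pbP.
  exists [:: SLet a]; split; [exact: der_refl|by constructor].
have [v [Dv Fv]] := compose HF.
by exists v; split => //; exact: derives_trans Dl Dv.
Qed.

Lemma closed_annX Y z : closed Y -> closed (annX z Y).
Proof. by case: z => //= h z _; exact: closed_dot. Qed.

Lemma closed_useful : closed (UsefulSet P).
Proof.
move=> D; rewrite !inE => /pbP [u [Du Fu]]; apply: pbT.
have HF : List.Forall (fun t => exists v, derives P [:: t] v /\ List.Forall (fun t => exists a, t = SLet a) v) u.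
  apply: List.Forall_impl Fu; case => [E zz [-> HE]|a _].
    move: HE; rewrite inE => /pbP [w Dw]; exists (map SLet w); split => //.
    by elim: w {Dw} => //= a w IH; constructor => //; exists a.
  exists [:: SLet a]; split; [exact: der_refl|by constructor; [exists a|]].
have [v [Dv Fv]] := compose HF.
have [w Ew] := forall_let Fv; exists w; rewrite -Ew; exact: derives_trans Du Dv.
Qed.

End GSide.
Section BSide.
Variables (N T I : finType) (P : prod N T I -> Prop).
Local Notation bs := (sym (N * {set N}) T (I * {set N})).
Local Notation PB' := (Pbar P).

Definition ProdS (t : bs) := exists w, derives PB' [:: t] (map SLet w).

Lemma prodS_let a : ProdS (SLet a).
Proof. exists [:: a]; exact: der_refl. Qed.

Lemma prod_list (u : seq bs) : List.Forall ProdS u -> exists w, derives PB' u (map SLet w).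
Proof.
move=> H.
have HF : List.Forall (fun t => exists v, derives PB' [:: t] v /\ List.Forall (fun t => exists a, t = SLet a) v) u.
  apply: List.Forall_impl H => t [w Dw]; exists (map SLet w); split => //.
  by elim: w {Dw} => //= a w IH; constructor => //; exists a.
have [v [Dv Fv]] := compose HF.
have [w Ew] := forall_let Fv; exists w; by rewrite -Ew.
Qed.

Lemma trans_gen (Y : {set N}) (rest : seq (I * {set N})) (L : N -> seq I -> Prop)
  (HL : forall E zz, L E zz -> [/\ zz = [::], E \in Y & ProdS (STerm (E, Y) rest)])
  (cY : closed P Y) :
  forall D z, Gen P L D z -> ProdS (STerm (D, annX P z Y) (annS P z Y ++ rest)).
Proof.
have HL' : forall E zz, L E zz -> zz = [::] /\ E \in Y.
  by move=> E zz /HL [? ? _].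
have Mem := gen_mem HL' cY.
move=> D z G; elim: G => {D z}
   [D z H|D z w H|D E F z H HE IHE HF IHF|D E f z H HE IHE|D f E z H HE IHE].
- by case: (HL _ _ H) => -> _ Hp.
- exists w; apply: derives1.
  have := @stepT _ _ _ PB' [::] [::] (D, annX P z Y) w (annS P z Y ++ rest).
  rewrite /= cats0; apply; split => //; apply: Mem; exact: GT H.
- have [w1 D1] := IHE; have [w2 D2] := IHF.
  exists (w1 ++ w2); apply: der_step.
    have := @stepB _ _ _ PB' [::] [::] (D, annX P z Y) (E, annX P z Y) (F, annX P z Y) (annS P z Y ++ rest).
    apply; rewrite /=; do 3 (split => //).
    split; first by apply: Mem; exact: GB H HE HF.
    split; apply: Mem; [exact: HE|exact: HF].
  rewrite map_cat; exact: (derives_cat D1 D2 (u1 := [:: _]) (u2 := [:: _])).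
- have [w1 D1] := IHE; exists w1; apply: der_step D1.
  have := @stepPush _ _ _ PB' [::] [::] (D, annX P z Y) (E, annX P (f :: z) Y) (f, annX P z Y) (annS P z Y ++ rest).
  apply; rewrite /=; do 3 (split => //).
  split; first by apply: Mem; exact: GPush H HE.
  exact: (Mem _ _ HE).
- have [w1 D1] := IHE; exists w1; apply: der_step D1.
  have := @stepPop _ _ _ PB' [::] [::] (D, annX P (f :: z) Y) (E, annX P z Y) (f, annX P z Y) (annS P z Y ++ rest).
  apply; rewrite /=; do 2 (split => //); split => //.
  split; first by have := Mem _ _ (GPop H HE).
  exact: (Mem _ _ HE).
Qed.

Definition WF (Xb : {set N}) (t : bs) : Prop :=
  match t with
  | SLet _ => True
  | STerm DY s => exists z, DY.2 = annX P z Xb /\ s = annS P z Xb /\ DY.1 \in DY.2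
  end.

Lemma wf_step Xb (u v : seq bs) : step PB' u v -> List.Forall (WF Xb) u -> List.Forall (WF Xb) v.
Proof.
case=> [u0 v0 A B C z H|u0 v0 A B f z H|u0 v0 A B f z H|u0 v0 A w0 z H]
  /List.Forall_app [H1 /List.Forall_cons_iff [Ht H2]]; apply/List.Forall_app; split => //.
- move: H Ht; case: A B C => [A XA] [B XB] [C XC] /= [-> [-> [_ [_ [HB HC]]]]] [z0 [E1 [E2 _]]].
  constructor; first by exists z0.
  constructor => //; by exists z0.
- move: H Ht; case: A B f => [A XA] [B XB] [f Xf] /= [-> [-> [_ [_ HB]]]] [z0 [E1 [E2 _]]].
  constructor => //; exists (f :: z0) => /=; rewrite -E1 -E2; do 2 split => //.
- move: H Ht; case: A B f => [A XA] [B XB] [f Xf] /= [-> [-> [_ [_ HB]]]] [[|h z0] [E1 [E2 _]]] //.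
  case: E2 => _ E3 E4; constructor => //; exists z0; by rewrite -E3 -E4.
- apply/List.Forall_app; split => //.
  by elim: w0 {H} => //= a w IH; constructor.
Qed.

Lemma wf_derives Xb (u v : seq bs) : derives PB' u v -> List.Forall (WF Xb) u -> List.Forall (WF Xb) v.
Proof. elim=> // a b c H _ IH Ha; apply: IH; exact: wf_step H Ha. Qed.

Definition Base (Y : {set N}) (rest : seq (I * {set N})) :=
  closed P Y /\ forall E, E \in Y -> ProdS (STerm (E, Y) rest).

Lemma base_up Y rest : Base Y rest -> forall z,
  Base (annX P z Y) (annS P z Y ++ rest).
Proof.
move=> [cY HY] z; split; first exact: closed_annX.
move=> E HE; have G := mem_gen HE.
apply: (@trans_gen Y rest (Lstd Y) _ cY E z G).
by move=> E' zz [-> H']; split => //; exact: HY.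
Qed.

Lemma side_prod Y rest C (v : seq bs) : Base Y rest -> C \in Y ->
  derives PB' [:: STerm (C, Y) [::]] v -> List.Forall ProdS (liftF rest v).
Proof.
move=> BY HC Dv.
have W : List.Forall (WF Y) v.
  apply: (@wf_derives Y _ _ Dv); constructor => //; by exists [::].
elim: v W {Dv} => [|t v IH] W; first by constructor.
move/List.Forall_cons_iff: W => [Ht Hv]; constructor; last exact: IH.
case: t Ht => [[D YD] s [z [/= E1 [E2 HD]]]|a _]; last exact: prodS_let.
rewrite /= E1 E2 in HD *.
have [_ H] := base_up BY z; exact: H.
Qed.

End BSide.
Section Pump.
Variables (N T I : finType) (P : prod N T I -> Prop) (alpha beta : I -> N).
Hypothesis Hocc : forall f : I, exists A B : N, P (PPush A B f).
Hypothesis Hab : forall (A B : N) (f : I), P (PPush A B f) -> A = alpha f /\ B = beta f.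
Local Notation phiP := (phi P alpha beta).

Lemma phi_cons a s : phiP (a :: s) = mmul P (phi1 P alpha beta a) (phiP s).
Proof. by []. Qed.

Lemma phi_one s : phiP s = @MOne N -> s = [::].
Proof.
case: s => // [[f Xa] s]; rewrite phi_cons /phi1 /=.
case: (phiP s) => //= B1 Y1 M1 A1 X1; by case: ifP.
Qed.

Lemma phi_ann s B' Y' M' A' X' : phiP s = MElt B' Y' M' A' X' ->
  s = annS P (map fst s) X' /\ Y' = annX P (map fst s) X'.
Proof.
elim: s B' Y' M' A' X' => // [[f Xa] s IH] B' Y' M' A' X'.
rewrite phi_cons /phi1 /=.
case E: (phiP s) => [||B1 Y1 M1 A1 X1] //=.
  by case=> _ <- _ _ <-; rewrite (phi_one E).
case: ifP => // /andP [/eqP EX _] [_ <- _ _ <-].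
have [E1 E2] := IH _ _ _ _ _ E.
by rewrite -E2 -EX -E1.
Qed.

Lemma push_ok f : P (PPush (alpha f) (beta f) f).
Proof. have [A [B H]] := Hocc f; have [<- <-] := Hab H; exact: H. Qed.

Lemma push_step f (Xa : {set N}) zz : alpha f \in Xa -> beta f \in dotX P [:: f] Xa ->
  step (Pbar P) [:: STerm (alpha f, Xa) zz] [:: STerm (beta f, dotX P [:: f] Xa) ((f, Xa) :: zz)].
Proof.
move=> H1 H2.
have := @stepPush _ _ _ (Pbar P) [::] [::] (alpha f, Xa) (beta f, dotX P [:: f] Xa) (f, Xa) zz.
apply; rewrite /=; do 2 (split => //); split; [exact: push_ok|by split].
Qed.

Lemma pump zbar0 s : forall B' Y' M' A' X', phiP s = MElt B' Y' M' A' X' ->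
  B' \in Y' -> A' \in X' -> Base P X' zbar0 ->
  exists x y, derives (Pbar P) [:: STerm (A', X') zbar0] (x ++ STerm (B', Y') (s ++ zbar0) :: y)
    /\ List.Forall (@ProdS _ _ _ P) x /\ List.Forall (@ProdS _ _ _ P) y.
Proof.
elim: s => // [[f Xa] s IH] B' Y' M' A' X'.
rewrite phi_cons /phi1 /=.
case E: (phiP s) => [||B1 Y1 M1 A1 X1] //=.
  case=> <- <- _ <- <- HB HA BX; rewrite (phi_one E) /=.
  exists [::], [::]; split; last by split; constructor.
  exact/derives1/push_step.
case: ifP => // /andP [/eqP EX /pbP [HB1 [Hal [u [v Duv]]]]] [<- <- _ <- <-] HB HA BX.
have HB1' : B1 \in Y1 by rewrite -EX.
have [x1 [y1 [D1 [Fx1 Fy1]]]] := IH _ _ _ _ _ E HB1' HA BX.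
have [Es Ey] := phi_ann E.
have BXa : Base P Xa (s ++ zbar0).
  have := base_up BX (map fst s); by rewrite -Es -Ey -EX.
have Dl := derives_lift (s ++ zbar0) Duv; rewrite /liftF map_cat /= -/(liftF _ u) -/(liftF _ v) in Dl.
have Fs := side_prod BXa HB1 Duv; rewrite /liftF map_cat /= -/(liftF _ u) -/(liftF _ v) in Fs.
move/List.Forall_app: Fs => [Fu /List.Forall_cons_iff [_ Fv]].
exists (x1 ++ liftF (s ++ zbar0) u), (liftF (s ++ zbar0) v ++ y1); split; last first.
  by split; apply/List.Forall_app.
rewrite -EX in D1; apply: (derives_trans D1).
have D2 := derives_ctx x1 y1 Dl; rewrite /= in D2.
apply: (derives_trans D2).
have D3 := derives1 (push_step (s ++ zbar0) Hal HB).
have D4 := derives_ctx (x1 ++ liftF (s ++ zbar0) u) (liftF (s ++ zbar0) v ++ y1) D3.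
rewrite -!catA /= in D4 *; exact: D4.
Qed.

End Pump.
Unset Implicit Arguments.

Theorem mainTheorem13 (N T I : finType) (S : N) (P : prod N T I -> Prop)
  (alpha beta : I -> N)
  (Pfin : exists s : list (prod N T I), forall p, P p <-> List.In p s)
  (HS : Useful P S)
  (Hocc : forall f : I, exists A B : N, P (PPush A B f))
  (Hab : forall (A B : N) (f : I), P (PPush A B f) -> A = alpha f /\ B = beta f)
  (B A : N) (X : {set N}) (M : bmat N)
  (Hid : mon_idem P (MElt B X M A X))
  (Hne : MElt B X M A X <> @MZero N /\ MElt B X M A X <> @MOne N)
  (zbar ze : seq (I * {set N}))
  (Hreach : reachable P S (STerm (B, X) zbar))
  (Hze : phi P alpha beta ze = MElt B X M A X) :
  forall w : seq T, Lang P [:: STerm (B, X) (ze ++ zbar)] w ->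
    exists2 w' : seq T, Lang P [:: STerm (B, X) zbar] w' & subseq w w'.
Proof.
move=> w Hw.
move: Hid; rewrite /mon_idem /=; case: ifP => // /andP [_ /pbP [HB [HA [u [v Duv]]]]] _.
case: Hreach => u0 [v0 D0].
have W0 : List.Forall (WF P (UsefulSet P)) [:: STerm (S, UsefulSet P) [::]].
  constructor => //; exists [::]; do 2 split => //; rewrite inE; exact: pbT.
have /List.Forall_app [_ /List.Forall_cons_iff [[z [/= EX [Ez _]]] _]] := wf_derives D0 W0.
have BU : Base P (UsefulSet P) [::].
  split; first exact: closed_useful.
  move=> E; rewrite inE => /pbP [w0 Dw0].
  have G : Gen P (fun _ _ => False) E [::].
    have HF : List.Forall (okL (fun _ _ => False)) (map SLet w0 : seq (sym N T I)).
      by elim: w0 {Dw0} => //= a w0 IH; constructor.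
    exact: (List.Forall_inv (gen_back Dw0 HF)).
  by have := @trans_gen _ _ _ P (UsefulSet P) [::] _ (fun _ _ (F : False) => match F with end) (@closed_useful _ _ _ P) E [::] G.
have BX : Base P X zbar.
  by have := base_up BU z; rewrite cats0 -EX -Ez.
have Fs := side_prod BX HB Duv; rewrite /liftF map_cat /= -/(liftF _ u) -/(liftF _ v) in Fs.
move/List.Forall_app: Fs => [Fu /List.Forall_cons_iff [_ Fv]].
have Dl := derives_lift zbar Duv; rewrite /liftF map_cat /= -/(liftF _ u) -/(liftF _ v) in Dl.
have [x [y [Dp [Fx Fy]]]] := pump Hocc Hab Hze HB HA BX.
set lu := liftF zbar u in Dl Fu; set lv := liftF zbar v in Dl Fv.
have [wL DL] : exists wL, derives (Pbar P) (lu ++ x) (map SLet wL).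
  by apply: prod_list; apply/List.Forall_app.
have [wR DR] : exists wR, derives (Pbar P) (y ++ lv) (map SLet wR).
  by apply: prod_list; apply/List.Forall_app.
exists (wL ++ w ++ wR); last first.
  exact: subseq_trans (prefix_subseq w wR) (suffix_subseq wL (w ++ wR)).
rewrite /Lang !map_cat.
apply: (derives_trans Dl).
have D2 := derives_ctx lu lv Dp; rewrite /= in D2.
apply: (derives_trans D2).
have -> : lu ++ (x ++ STerm (B, X) (ze ++ zbar) :: y) ++ lv
        = (lu ++ x) ++ [:: STerm (B, X) (ze ++ zbar)] ++ (y ++ lv) by rewrite -!catA.
apply: (derives_trans (derives_ctx _ _ Hw)).
exact: derives_cat DL (derives_cat (der_refl _ _) DR).
Qed.
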